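(* Let $G$ be a connected graph in $\mathcal{C}$ and $C$ an induced $C_5$ in $G$ with vertices $0,\dots,4$ in cyclic order. Suppose that for some $i$ the sets $X_i, X_{i+1}, X_{i+2}$ are all nonempty, and let $\{j,k,\ell\}=\{i,i+1,i+2\}$. If $|X_j|\ge 3$, then $|X_k|=|X_\ell|=1$.
   Context: $\mathcal{C}=\mathrm{Free}(\text{claw}, 4K_1, \text{5-wheel}, C_5\text{-twin}, P_5\text{-twin}, K_5-e)$, where $\mathrm{Free}(L)$ is the class of graphs with no induced subgraph isomorphic to a member of $L$; the claw is $K_{1,3}$; $4K_1$ is the edgeless graph on 4 vertices; the 5-wheel is $C_5$ plus a vertex adjacent to all five cycle vertices; the $C_5$-twin is $C_5$ plus a new vertex adjacent to one cycle vertex $v$ and both cycle-neighbours of $v$; the $P_5$-twin is a path $p_1p_2p_3p_4p_5$ plus a new vertex adjacent to exactly $p_2,p_3,p_4$; $K_5-e$ is $K_5$ minus one edge. Given an induced cycle $C$ of length 5 with vertices $0,\dots,4$ in cyclic order (indices taken mod 5): $R$ is the set of vertices outside $C$ with no neighbour in $C$; $X_j$ is the set of vertices outside $C$ whose neighbourhood in $C$ is exactly $\{j,j+1\}$; $Y_j$ is the set of vertices outside $C$ whose neighbourhood in $C$ is exactly $\{j,j+1,j+2,j+3\}$; $X=\bigcup_j X_j$, $Y=\bigcup_j Y_j$. *)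

(* Defs.v *)
From mathcomp Require Import all_boot.
Set Implicit Arguments. Unset Strict Implicit. Unset Printing Implicit Defensive.

Definition simple_graph (T : finType) (e : rel T) : Prop :=
  symmetric e /\ irreflexive e.

Definition connected_graph (T : finType) (e : rel T) : Prop :=
  forall x y : T, connect e x y.

Definition mkpat (n : nat) (s : seq (nat * nat)) : rel 'I_n :=
  fun a b => ((val a, val b) \in s) || ((val b, val a) \in s).
Arguments mkpat : clear implicits.

Definition has_induced (T : finType) (e : rel T) (n : nat) (h : rel 'I_n) : Prop :=
  exists f : 'I_n -> T, injective f /\ forall a b, e (f a) (f b) = h a b.

Definition claw : rel 'I_4 := mkpat 4 [:: (0,1); (0,2); (0,3)].
Definition fourK1 : rel 'I_4 := mkpat 4 [::].
Definition c5_edges : seq (nat * nat) := [:: (0,1); (1,2); (2,3); (3,4); (4,0)].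
Definition wheel5 : rel 'I_6 :=
  mkpat 6 (c5_edges ++ [:: (5,0); (5,1); (5,2); (5,3); (5,4)]).
Definition c5_twin : rel 'I_6 := mkpat 6 (c5_edges ++ [:: (5,0); (5,1); (5,4)]).
Definition p5_twin : rel 'I_6 :=
  mkpat 6 [:: (0,1); (1,2); (2,3); (3,4); (5,1); (5,2); (5,3)].
Definition K5_minus_e : rel 'I_5 :=
  mkpat 5 [:: (0,2); (0,3); (0,4); (1,2); (1,3); (1,4); (2,3); (2,4); (3,4)].

Definition in_class_C (T : finType) (e : rel T) : Prop :=
  ~ has_induced e claw /\ ~ has_induced e fourK1 /\ ~ has_induced e wheel5 /\
  ~ has_induced e c5_twin /\ ~ has_induced e p5_twin /\ ~ has_induced e K5_minus_e.

Definition succ5 (j : 'I_5) : 'I_5 := inord ((j + 1) %% 5).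

Definition induced_C5 (T : finType) (e : rel T) (c : 'I_5 -> T) : Prop :=
  injective c /\ forall a b, e (c a) (c b) = (b == succ5 a) || (a == succ5 b).

Definition Xset (T : finType) (e : rel T) (c : 'I_5 -> T) (j : 'I_5) : {set T} :=
  [set v | (v \notin codom c) && ([set i | e v (c i)] == [set j; succ5 j])].

(* Main.v *)
Require Import Defs.
From mathcomp Require Import all_boot.
Set Implicit Arguments. Unset Strict Implicit. Unset Printing Implicit Defensive.

Definition hpat (s : seq (nat * nat)) (a b : nat) : bool := ((a, b) \in s) || ((b, a) \in s).

Definition pats : seq (nat * seq (nat * nat)) :=
  [:: (4, [:: (0,1); (0,2); (0,3)]); (4, [::]);
      (6, c5_edges ++ [:: (5,0); (5,1); (5,2); (5,3); (5,4)]);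
      (6, c5_edges ++ [:: (5,0); (5,1); (5,4)]);
      (6, [:: (0,1); (1,2); (2,3); (3,4); (5,1); (5,2); (5,3)]);
      (5, [:: (0,2); (0,3); (0,4); (1,2); (1,3); (1,4); (2,3); (2,4); (3,4)])].


Fixpoint allb {A} (f : A -> bool) (l : seq A) : bool :=
  if l is x :: l' then (if f x then allb f l' else false) else true.
Fixpoint hasb {A} (f : A -> bool) (l : seq A) : bool :=
  if l is x :: l' then (if f x then true else hasb f l') else false.

Definition cyc (x y : nat) : bool := (y == (x + 1) %% 5) || (x == (y + 1) %% 5).
Definition grp (t : nat) : nat := if t < 3 then 0 else if t < 5 then 1 else 2.
Definition pidx (t u : nat) : nat :=
  match t, u with
  | 0, 3 => 0 | 0, 4 => 1 | 0, 5 => 2 | 1, 3 => 3 | 1, 4 => 4 | 1, 5 => 5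
  | 2, 3 => 6 | 2, 4 => 7 | 2, 5 => 8 | 3, 5 => 9 | 4, 5 => 10 | _, _ => 11 end.
Definition off (d : nat * nat * nat) (t : nat) : nat :=
  if t < 3 then d.1.1 else if t < 5 then d.1.2 else d.2.
Definition cadj (d : nat * nat * nat) (bs : seq bool) (x y : nat) : bool :=
  if x < 5 then (if y < 5 then cyc x y else (x == off d (y - 5)) || (x == (off d (y - 5)).+1))
  else if y < 5 then (y == off d (x - 5)) || (y == (off d (x - 5)).+1)
  else if x == y then false else if grp (x - 5) == grp (y - 5) then true else
    if x < y then nth false bs (pidx (x - 5) (y - 5)) else nth false bs (pidx (y - 5) (x - 5)).

Definition chk (n : nat) (s : seq (nat * nat)) (adj : nat -> nat -> bool) (w : seq nat) : bool :=
  if size w == n then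
  allb (fun a => allb (fun b => adj (nth 0 w a) (nth 0 w b) == hpat s a b) (iota 0 n)) (iota 0 n)
  && (uniq w && all (fun x => x < 11) w) else false.

Definition perms3 : seq (nat * nat * nat) :=
  [:: (0,1,2); (0,2,1); (1,0,2); (1,2,0); (2,0,1); (2,1,0)].

Definition allcands : seq (seq (nat * seq nat)) := [::
  [:: (1,[::4;5;8;10]); (1,[::4;6;9;10]); (1,[::4;7;8;10]); (4,[::4;0;5;8;2;7]); (1,[::4;7;9;10]); (4,[::4;0;6;9;2;7]); (4,[::4;0;5;10;2;6]); (1,[::4;5;9;10]); (4,[::0;5;8;2;3;9]); (4,[::4;0;5;10;2;7]); (0,[::10;3;6;8]); (4,[::4;0;5;9;2;7]); (0,[::10;3;7;8]); (4,[::4;0;5;9;2;6]); (4,[::4;0;6;8;2;7]); (0,[::10;3;5;9]); (1,[::4;6;8;10]); (4,[::4;0;5;8;2;6]); (0,[::10;3;6;9]); (0,[::10;3;7;9]); (4,[::0;1;8;10;3;9])];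
  [:: (1,[::4;5;8;10]); (1,[::4;6;9;10]); (1,[::4;7;8;10]); (4,[::4;0;5;8;2;7]); (1,[::4;7;9;10]); (4,[::4;0;6;9;2;7]); (4,[::4;0;5;10;2;6]); (1,[::4;5;9;10]); (4,[::4;0;5;9;2;6]); (4,[::4;0;5;10;2;7]); (4,[::4;0;6;10;2;7]); (4,[::4;0;5;9;2;7]); (4,[::4;0;1;10;9;5]); (1,[::4;6;8;10]); (4,[::4;0;6;8;2;7]); (4,[::4;0;1;10;9;7]); (4,[::4;0;5;8;2;6]); (4,[::1;10;8;3;4;9])];
  [:: (1,[::4;5;8;10]); (1,[::4;6;9;10]); (1,[::4;7;8;10]); (4,[::0;8;5;2;3;7]); (1,[::4;7;9;10]); (4,[::0;9;6;2;3;7]); (4,[::0;1;5;10;3;6]); (1,[::4;5;9;10]); (4,[::0;9;5;2;3;6]); (4,[::0;1;5;10;3;7]); (4,[::0;1;6;10;3;7]); (4,[::0;9;5;2;3;7]); (0,[::10;3;5;9]); (1,[::4;6;8;10]); (4,[::0;8;6;2;3;7]); (0,[::10;3;7;9]); (4,[::0;8;5;2;3;6]); (4,[::4;0;8;10;2;9])];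
  [:: (1,[::4;5;8;10]); (1,[::4;6;9;10]); (1,[::4;7;8;10]); (4,[::0;1;5;8;3;7]); (1,[::4;7;9;10]); (4,[::0;1;6;9;3;7]); (4,[::0;10;5;2;3;6]); (1,[::4;5;9;10]); (4,[::0;1;5;9;3;6]); (4,[::0;10;5;2;3;7]); (4,[::0;10;6;2;3;7]); (4,[::0;1;5;9;3;7]); (0,[::10;0;5;9]); (1,[::4;6;8;10]); (4,[::0;1;6;8;3;7]); (0,[::10;0;7;9]); (4,[::0;1;5;8;3;6]); (3,[::8;10;0;4;3;9])];
  [:: (1,[::4;5;8;10]); (1,[::4;6;9;10]); (1,[::4;7;8;10]); (3,[::5;8;0;4;3;7]); (1,[::4;7;9;10]); (3,[::6;9;0;4;3;7]); (4,[::1;10;5;3;4;6]); (1,[::4;5;9;10]); (4,[::4;0;8;5;2;9]); (4,[::1;10;5;3;4;7]); (4,[::4;0;1;10;6;8]); (3,[::5;9;0;4;3;7]); (4,[::4;0;1;10;7;8]); (3,[::5;9;0;4;3;6]); (3,[::6;8;0;4;3;7]); (4,[::4;0;1;10;5;9]); (1,[::4;6;8;10]); (3,[::5;8;0;4;3;6]); (4,[::4;0;1;10;6;9]); (4,[::4;0;1;10;7;9]); (4,[::4;0;8;10;2;9])];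
  [:: (1,[::4;5;8;10]); (1,[::4;6;9;10]); (1,[::4;7;8;10]); (4,[::1;8;5;3;4;7]); (1,[::4;7;9;10]); (4,[::1;9;6;3;4;7]); (3,[::5;10;0;4;3;6]); (1,[::4;5;9;10]); (4,[::0;1;8;5;3;9]); (3,[::5;10;0;4;3;7]); (0,[::10;0;6;8]); (4,[::1;9;5;3;4;7]); (0,[::10;0;7;8]); (4,[::1;9;5;3;4;6]); (4,[::1;8;6;3;4;7]); (0,[::10;0;5;9]); (1,[::4;6;8;10]); (4,[::1;8;5;3;4;6]); (0,[::10;0;6;9]); (0,[::10;0;7;9]); (4,[::0;10;8;2;3;9])]].

Definition badc (d : nat * nat * nat) (bs : seq bool) : bool :=
  hasb (fun kw => if kw.1 < 6 then (let p := nth (0, [::]) pats kw.1 in chk p.1 p.2 (cadj d bs) kw.2) else false)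
    (nth [::] allcands (index d perms3)).

Fixpoint allbools (n : nat) : seq (seq bool) :=
  if n is n'.+1 then [seq b :: s | b <- [:: true; false], s <- allbools n'] else [:: [::]].

Lemma concrete_all : allb (fun d => allb (badc d) (allbools 11)) perms3.
Proof. vm_compute. reflexivity. Qed.

Lemma allbE A (f : A -> bool) l : allb f l = all f l.
Proof. by elim: l => //= x l ->; case: (f x). Qed.
Lemma hasbE A (f : A -> bool) l : hasb f l = has f l.
Proof. by elim: l => //= x l ->; case: (f x). Qed.

Lemma inj_nth (T : eqType) n (s : seq T) x0 : size s = n -> uniq s ->
  injective (fun a : 'I_n => nth x0 s a).
Proof.
move=> Hs Hu a b /eqP; rewrite nth_uniq ?Hs // => /eqP; exact: val_inj.
Qed.

Lemma chk_sound (T : finType) (e : rel T) (f : 'I_11 -> T) n s (adj : nat -> nat -> bool) w :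
  injective f -> (forall x y : 'I_11, e (f x) (f y) = adj x y) -> chk n s adj w ->
  has_induced e (mkpat n s).
Proof.
move=> Hf He; rewrite /chk; case: eqP => // Hw /andP [Ha /andP [Hu Hl]].
move: Ha; rewrite allbE => /allP Ha.
have Hlt : forall a : 'I_n, nth 0 w a < 11.
  move=> a; move/allP: Hl; apply; apply: mem_nth; by rewrite Hw.
exists (fun a => f (inord (nth 0 w a))); split.
  move=> a b /Hf /(congr1 (@nat_of_ord _)); rewrite /= !inordK // => /eqP.
  by rewrite nth_uniq ?Hw // => /eqP /val_inj.
move=> a b; rewrite He !inordK //.
have := Ha a; rewrite mem_iota /= add0n ltn_ord => /(_ isT); rewrite allbE => /allP.
move=> /(_ b); rewrite mem_iota /= add0n ltn_ord => /(_ isT) /eqP ->.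
by [].
Qed.

Lemma pats_bad (T : finType) (e : rel T) k : k < 6 ->
  has_induced e (mkpat (nth (0, [::]) pats k).1 (nth (0, [::]) pats k).2) ->
  ~ in_class_C e.
Proof.
move=> Hk H [h1 [h2 [h3 [h4 [h5 h6]]]]].
by move: Hk H; case: k => [|[|[|[|[|[|//]]]]]] _ H; [apply h1|apply h2|apply h3|apply h4|apply h5|apply h6].
Qed.

Lemma badc_sound (T : finType) (e : rel T) (f : 'I_11 -> T) d bs :
  in_class_C e -> injective f -> (forall x y : 'I_11, e (f x) (f y) = cadj d bs x y) ->
  badc d bs -> False.
Proof.
move=> HC Hf He; rewrite /badc hasbE => /hasP [[k w] _] /=.
case: ifP => // Hk Hc; apply: (pats_bad Hk _ HC).
exact: (chk_sound Hf He Hc).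
Qed.

Lemma allbools_mem n bs : size bs = n -> bs \in allbools n.
Proof.
elim: n bs => [|n IH] [|b bs] //= [Hs].
rewrite !mem_cat; case: b; apply/orP; [left|right; apply/orP; left]; rewrite mem_map ?IH //; by move=> ? ? [].
Qed.

Lemma concrete d bs : d \in perms3 -> size bs = 11 -> badc d bs.
Proof.
move=> Hd Hs; have := concrete_all; rewrite allbE => /allP /(_ d Hd).
rewrite allbE => /allP; apply; exact: allbools_mem.
Qed.

Definition rt (i : 'I_5) (p : nat) : 'I_5 := Ordinal (ltn_pmod (i + p) (erefl : 0 < 5)).
Lemma val_succ5 (a : 'I_5) : nat_of_ord (succ5 a) = (a + 1) %% 5.
Proof. by rewrite /succ5 inordK // ltn_pmod. Qed.

Definition alln n (P : nat -> bool) := all P (iota 0 n).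
Lemma allnP n P : alln n P -> forall x, x < n -> P x.
Proof. by move=> /allP H x Hx; apply: H; rewrite mem_iota. Qed.

Lemma rtcyc (i p q : 'I_5) :
  ((rt i q == succ5 (rt i p)) || (rt i p == succ5 (rt i q))) = cyc p q.
Proof.
rewrite -!val_eqE /= !val_succ5.
have H : alln 5 (fun i => alln 5 (fun p => alln 5 (fun q =>
  (((i + q) %% 5 == ((i + p) %% 5 + 1) %% 5) || ((i + p) %% 5 == ((i + q) %% 5 + 1) %% 5))
   == cyc p q))).
  vm_compute; reflexivity.
by apply/eqP; apply: (allnP (allnP (allnP H (ltn_ord i)) (ltn_ord p)) (ltn_ord q)).

Qed.

Lemma rtinj (i : 'I_5) p q : p < 5 -> q < 5 -> (rt i p == rt i q) = (p == q).
Proof.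
move=> Hp Hq; rewrite -val_eqE /=.
have H : alln 5 (fun i => alln 5 (fun p => alln 5 (fun q =>
  ((i + p) %% 5 == (i + q) %% 5) == (p == q)))).
  vm_compute; reflexivity.
by have /eqP := allnP (allnP (allnP H (ltn_ord i)) Hp) Hq.
Qed.

Lemma rtX (i : 'I_5) p o : p < 5 -> o < 3 ->
  ((rt i p == rt i o) || (rt i p == succ5 (rt i o))) = ((p == o) || (p == o.+1)).
Proof.
move=> Hp Ho; rewrite -!val_eqE /= !val_succ5 /=.
have H : alln 5 (fun i => alln 5 (fun p => alln 3 (fun o =>
  (((i + p) %% 5 == (i + o) %% 5) || ((i + p) %% 5 == ((i + o) %% 5 + 1) %% 5))
   == ((p == o) || (p == o.+1))))).
  vm_compute; reflexivity.
by have /eqP := allnP (allnP (allnP H (ltn_ord i)) Hp) Ho.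
Qed.

Lemma rot012 (i : 'I_5) : [/\ i = rt i 0, succ5 i = rt i 1 & succ5 (succ5 i) = rt i 2].
Proof.
have H : alln 5 (fun i => [&& i == (i + 0) %% 5, (i + 1) %% 5 == (i + 1) %% 5 &
   ((i + 1) %% 5 + 1) %% 5 == (i + 2) %% 5]).
  vm_compute; reflexivity.
move: (allnP H (ltn_ord i)) => /and3P [/eqP h1 /eqP h2 /eqP h3].
split; apply: val_inj; rewrite /= ?val_succ5 //.
Qed.

Lemma pred_facts (A : 'I_5) : [/\ A = succ5 (rt A 4), rt A 4 != A & rt A 4 != succ5 A].
Proof.
rewrite -!val_eqE /= !val_succ5 /=.
have H : alln 5 (fun A => [&& A == ((A + 4) %% 5 + 1) %% 5, (A + 4) %% 5 != A &
   (A + 4) %% 5 != (A + 1) %% 5]).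
  vm_compute; reflexivity.
move: (allnP H (ltn_ord A)) => /and3P [/eqP h1 h2 h3].
by split => //; apply: val_inj; rewrite /= val_succ5.
Qed.

Lemma disj5 (A B : 'I_5) :
  ((A == B) || (A == succ5 B)) -> ((succ5 A == B) || (succ5 A == succ5 B)) -> A = B.
Proof.
move=> h1 h2; apply: val_inj; apply/eqP; move: h1 h2; rewrite -!val_eqE /= !val_succ5 => h1 h2.
have H : alln 5 (fun A => alln 5 (fun B =>
  ((A == B) || (A == (B + 1) %% 5)) ==> (((A + 1) %% 5 == B) || ((A + 1) %% 5 == (B + 1) %% 5))
  ==> (A == B))).
  vm_compute; reflexivity.
by move: (allnP (allnP H (ltn_ord A)) (ltn_ord B)); rewrite h1 h2.
Qed.

Section G.
Variables (T : finType) (e : rel T) (c : 'I_5 -> T).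
Hypothesis (Hs : simple_graph e) (HC : in_class_C e) (Hc : induced_C5 e c).

Lemma XsetP A v : v \in Xset e c A ->
  v \notin codom c /\ forall t, e v (c t) = (t == A) || (t == succ5 A).
Proof.
rewrite inE => /andP [H1 /eqP H2]; split => // t.
by have := congr1 (fun S : {set 'I_5} => t \in S) H2; rewrite !inE.
Qed.

Lemma notc v A t : v \in Xset e c A -> (c t == v) = false.
Proof.
move=> /XsetP [H _]; apply/negP => /eqP E; move: H; rewrite -E codom_f //.
Qed.

Lemma Xdisj A B v : v \in Xset e c A -> v \in Xset e c B -> A = B.
Proof.
move=> /XsetP [_ HA] /XsetP [_ HB]; apply: disj5.
  by rewrite -HB HA eqxx.
by rewrite -HB HA eqxx orbT.
Qed.

Lemma esymG x y : e x y = e y x.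
Proof. by case: Hs => S _; rewrite S. Qed.
Lemma eirrG x : e x x = false.
Proof. by case: Hs => _ I; rewrite I. Qed.

Lemma clique A u v : u \in Xset e c A -> v \in Xset e c A -> u != v -> e u v.
Proof.
move=> Hu Hv Huv; apply/negPn/negP => Euv.
case: (pred_facts A) => EA nPA nPsA.
set P := rt A 4 in EA nPA nPsA.
have [_ eu] := XsetP Hu; have [_ ev] := XsetP Hv.
have cu := notc _ Hu; have cv := notc _ Hv.
have cinj : (c A == c P) = false.
  apply/negP => /eqP /(proj1 Hc) E; by rewrite E eqxx in nPA.
have eAP : e (c A) (c P) by rewrite (proj2 Hc) -EA eqxx orbT.
have euP : e u (c P) = false by rewrite eu (negbTE nPA) (negbTE nPsA).
have evP : e v (c P) = false by rewrite ev (negbTE nPA) (negbTE nPsA).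
have euA : e u (c A) by rewrite eu eqxx.
have evA : e v (c A) by rewrite ev eqxx.
case: HC => h1 _; apply: h1.
exists (fun a : 'I_4 => nth (c A) [:: c A; u; v; c P] a); split.
  apply: inj_nth => //=; rewrite !inE cu cv cinj (negbTE Huv) /= !(eq_sym _ (c P)) cu cv //=.
move=> [[|[|[|[|//]]]] Ha] [[|[|[|[|//]]]] Hb];
  rewrite /claw /mkpat /= ?eirrG ?euA ?evA ?eAP ?euP ?evP ?(negbTE Euv) //;
  rewrite esymG ?euA ?evA ?eAP ?euP ?evP ?(negbTE Euv) //.
Qed.
End G.

Definition cprs : seq (nat * nat) :=
  [:: (0,3);(0,4);(0,5);(1,3);(1,4);(1,5);(2,3);(2,4);(2,5);(3,5);(4,5)].

Lemma perms3_facts d : d \in perms3 ->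
  [/\ d.1.1 != d.1.2, d.1.1 != d.2, d.1.2 != d.2 & [/\ d.1.1 < 3, d.1.2 < 3 & d.2 < 3]].
Proof.
have H : all (fun d : nat * nat * nat => [&& d.1.1 != d.1.2, d.1.1 != d.2, d.1.2 != d.2,
   d.1.1 < 3, d.1.2 < 3 & d.2 < 3]) perms3 by [].
by move=> Hd; move/allP: H => /(_ d Hd) /and5P [-> -> -> -> /andP [-> ->]].
Qed.

Lemma core (T : finType) (e : rel T) (c : 'I_5 -> T) (i : 'I_5) d (u1 u2 u3 w1 w2 z : T) :
  simple_graph e -> in_class_C e -> induced_C5 e c -> d \in perms3 ->
  u1 \in Xset e c (rt i d.1.1) -> u2 \in Xset e c (rt i d.1.1) -> u3 \in Xset e c (rt i d.1.1) ->
  w1 \in Xset e c (rt i d.1.2) -> w2 \in Xset e c (rt i d.1.2) -> z \in Xset e c (rt i d.2) ->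
  u1 != u2 -> u1 != u3 -> u2 != u3 -> w1 != w2 -> False.
Proof.
move=> Hs HC Hc Hd Hu1 Hu2 Hu3 Hw1 Hw2 Hz n12 n13 n23 nw.
have [dab dac dbc [da3 db3 dc3]] := perms3_facts Hd.
set Ls := [:: u1; u2; u3; w1; w2; z].
set L := [seq c (rt i p) | p <- iota 0 5] ++ Ls.
set bs := [seq e (nth (c i) L (5 + p.1)) (nth (c i) L (5 + p.2)) | p <- cprs].
have F1 : forall p, p < 5 -> nth (c i) L p = c (rt i p).
  move=> p Hp; rewrite nth_cat size_map size_iota Hp (nth_map 0) ?size_iota //.
  by rewrite nth_iota.
have F2 : forall t, nth (c i) L (5 + t) = nth (c i) Ls t.
  by move=> t; rewrite nth_cat size_map size_iota ltnNge leq_addr /= addKn.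
have off3 : forall t, off d t < 3 by move=> t; rewrite /off; case: ifP => _ //; case: ifP.
have F3 : forall t, t < 6 -> nth (c i) Ls t \in Xset e c (rt i (off d t)).
  by case=> [|[|[|[|[|[|//]]]]]].
have F4 : forall v o p, v \in Xset e c (rt i o) -> o < 3 -> p < 5 ->
    e v (c (rt i p)) = (p == o) || (p == o.+1).
  move=> v o p Hv Ho Hp; have [_ ->] := XsetP Hv; exact: rtX.
have F5 : forall p q, p < 5 -> q < 5 -> e (c (rt i p)) (c (rt i q)) = cyc p q.
  move=> p q Hp Hq; rewrite (proj2 Hc); exact: (rtcyc i (Ordinal Hp) (Ordinal Hq)).
have Xne : forall v w a b, v \in Xset e c (rt i a) -> w \in Xset e c (rt i b) ->
    a < 3 -> b < 3 -> a != b -> v != w.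
  move=> v w a b Hv Hw Ha Hb Hab; apply/eqP => E; subst w.
  have Ha5 : a < 5 by apply: leq_trans Ha _.
  have Hb5 : b < 5 by apply: leq_trans Hb _.
  by move: (Xdisj Hv Hw) => /eqP; rewrite (rtinj i Ha5 Hb5) (negbTE Hab).
apply: (badc_sound HC (f := fun x : 'I_11 => nth (c i) L x) (d := d) (bs := bs)).
- apply: inj_nth; first by rewrite size_cat size_map size_iota.
  rewrite cat_uniq; apply/and3P; split.
  + rewrite map_inj_in_uniq ?iota_uniq // => p q; rewrite !mem_iota /= !add0n => Hp Hq.
    by move/(proj1 Hc)/eqP; rewrite rtinj // => /eqP.
  + apply/hasPn => v Hv; apply/mapP => [[p _ E]].
    have [t Ht Et] : exists2 t, t < 6 & v = nth (c i) Ls t.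
      by exists (index v Ls); rewrite ?index_mem ?nth_index.
    by have := notc (rt i p) (F3 t Ht); rewrite -Et E eqxx.
  + rewrite /Ls /= !inE !(negbTE n12) !(negbTE n13) !(negbTE n23) !(negbTE nw).
    have X1 := Xne _ _ _ _ Hu1 Hw1 da3 db3 dab; have X2 := Xne _ _ _ _ Hu1 Hw2 da3 db3 dab.
    have X3 := Xne _ _ _ _ Hu1 Hz da3 dc3 dac; have X4 := Xne _ _ _ _ Hu2 Hw1 da3 db3 dab.
    have X5 := Xne _ _ _ _ Hu2 Hw2 da3 db3 dab; have X6 := Xne _ _ _ _ Hu2 Hz da3 dc3 dac.
    have X7 := Xne _ _ _ _ Hu3 Hw1 da3 db3 dab; have X8 := Xne _ _ _ _ Hu3 Hw2 da3 db3 dab.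
    have X9 := Xne _ _ _ _ Hu3 Hz da3 dc3 dac; have X10 := Xne _ _ _ _ Hw1 Hz db3 dc3 dbc.
    have X11 := Xne _ _ _ _ Hw2 Hz db3 dc3 dbc.
    by rewrite (negbTE X1) (negbTE X2) (negbTE X3) (negbTE X4) (negbTE X5) (negbTE X6)
      (negbTE X7) (negbTE X8) (negbTE X9) (negbTE X10) X11.
- have cl : forall v w, v \in Xset e c (rt i d.1.1) -> w \in Xset e c (rt i d.1.1) ->
      v != w -> e v w by move=> v w; exact: clique.
  have c12 := cl _ _ Hu1 Hu2 n12; have c13 := cl _ _ Hu1 Hu3 n13.
  have c23 := cl _ _ Hu2 Hu3 n23; have cw := clique Hs HC Hc Hw1 Hw2 nw.
  move=> [x Hx] [y Hy] /=.
  case: (ltnP x 5) => Hx5; case: (ltnP y 5) => Hy5.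
  + by rewrite !F1 // F5 // /cadj Hx5 Hy5.
  + have [t Et] : exists t, y = 5 + t by exists (y - 5); rewrite subnKC.
    subst y; have Ht : t < 6 by rewrite -(ltn_add2l 5).
    rewrite F1 // F2 /cadj Hx5 ltnNge leq_addr /= addKn (esymG Hs).
    exact: F4 (F3 t Ht) (off3 t) Hx5.
  + have [t Et] : exists t, x = 5 + t by exists (x - 5); rewrite subnKC.
    subst x; have Ht : t < 6 by rewrite -(ltn_add2l 5).
    rewrite F2 F1 // /cadj Hy5 ltnNge leq_addr /= addKn.
    exact: F4 (F3 t Ht) (off3 t) Hy5.
  + have [t Et] : exists t, x = 5 + t by exists (x - 5); rewrite subnKC.
    subst x; have Ht : t < 6 by rewrite -(ltn_add2l 5).
    have [u Eu] : exists u, y = 5 + u by exists (y - 5); rewrite subnKC.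
    subst y; have Hu : u < 6 by rewrite -(ltn_add2l 5).
    rewrite !F2 /cadj !ltnNge !leq_addr /= !addKn.
    clear Hx5 Hy5; move: Ht Hu Hx Hy; case: t => [|[|[|[|[|[|//]]]]]] _; case: u => [|[|[|[|[|[|//]]]]]] _ _ _;
      rewrite /bs /= ?(eirrG Hs) ?c12 ?c13 ?c23 ?cw //; rewrite (esymG Hs) ?c12 ?c13 ?c23 ?cw //.
- by apply: concrete => //; rewrite size_map.
Qed.

Lemma one_of (T : finType) (A : {set T}) : 0 < #|A| -> exists x, x \in A.
Proof. by move/card_gt0P. Qed.

Lemma two_of (T : finType) (A : {set T}) : 1 < #|A| ->
  exists x y, [/\ x \in A, y \in A & x != y].
Proof.
move=> H; have [x Hx] := one_of (ltnW H).
have : 0 < #|A :\ x| by move: H; rewrite (cardsD1 x A) Hx.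
move=> /one_of [y]; rewrite in_setD1 => /andP [Hyx Hy].
by exists x, y; split => //; rewrite eq_sym.
Qed.

Lemma three_of (T : finType) (A : {set T}) : 2 < #|A| ->
  exists x y z, [/\ x \in A, y \in A, z \in A & [/\ x != y, x != z & y != z]].
Proof.
move=> H; have [x Hx] := one_of (ltnW (ltnW H)).
have : 1 < #|A :\ x| by move: H; rewrite (cardsD1 x A) Hx.
move=> /two_of [y [z [Hy Hz Hyz]]]; move: Hy Hz; rewrite !in_setD1 => /andP [Hyx Hy] /andP [Hzx Hz].
by exists x, y, z; split => //; split => //; rewrite eq_sym.
Qed.

Lemma perm_in a b c : a < 3 -> b < 3 -> c < 3 -> a != b -> a != c -> b != c -> (a, b, c) \in perms3.
Proof.
by case: a => [|[|[|//]]]; case: b => [|[|[|//]]]; case: c => [|[|[|//]]].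
Qed.

Theorem claim19 (T : finType) (e : rel T) (c : 'I_5 -> T) (i j k l : 'I_5) :
  simple_graph e -> connected_graph e -> in_class_C e -> induced_C5 e c ->
  Xset e c i != set0 -> Xset e c (succ5 i) != set0 ->
  Xset e c (succ5 (succ5 i)) != set0 ->
  [set j; k; l] = [set i; succ5 i; succ5 (succ5 i)] ->
  uniq [:: j; k; l] ->
  3 <= #|Xset e c j| ->
  #|Xset e c k| = 1 /\ #|Xset e c l| = 1.
Proof.
move=> Hs _ HC Hc N0 N1 N2 Hset Hu Hj.
have [E0 E1 E2] := rot012 i.
have Hrep : forall v, v \in [set j; k; l] -> exists2 dv, dv < 3 & v = rt i dv.
  move=> v; rewrite Hset !inE => /orP [/orP [/eqP ->|/eqP ->]|/eqP ->].
  - by exists 0.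
  - by exists 1.
  - by exists 2.
have Nd : forall dv, dv < 3 -> Xset e c (rt i dv) != set0.
  by case=> [|[|[|//]]] _; rewrite -?E0 -?E1 -?E2.
have [dj dj3 Ej] : exists2 dv, dv < 3 & j = rt i dv by apply: Hrep; rewrite !inE eqxx.
have [dk dk3 Ek] : exists2 dv, dv < 3 & k = rt i dv by apply: Hrep; rewrite !inE eqxx orbT.
have [dl dl3 El] : exists2 dv, dv < 3 & l = rt i dv by apply: Hrep; rewrite !inE eqxx !orbT.
move: Hu; rewrite /= !inE andbT negb_or => /andP [/andP [njk njl] nkl].
have djk : dj != dk by apply: contraNneq njk => E; rewrite Ej Ek E.
have djl : dj != dl by apply: contraNneq njl => E; rewrite Ej El E.
have dkl : dk != dl by apply: contraNneq nkl => E; rewrite Ek El E.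
have [u1 [u2 [u3 [Hu1 Hu2 Hu3 [n12 n13 n23]]]]] := three_of Hj.
rewrite Ej in Hu1 Hu2 Hu3.
have one : forall dv dw, dv < 3 -> dw < 3 -> dj != dv -> dj != dw -> dv != dw ->
    #|Xset e c (rt i dv)| = 1.
  move=> dv dw Hv Hw jv jw vw; apply/eqP; rewrite eqn_leq; apply/andP; split; last first.
    by rewrite card_gt0; exact: Nd.
  rewrite leqNgt; apply/negP => /two_of [w1 [w2 [Hw1 Hw2 nw]]].
  have [z Hz] : exists z, z \in Xset e c (rt i dw).
    by apply/set0Pn; exact: Nd.
  exact: (core Hs HC Hc (perm_in dj3 Hv Hw jv jw vw) Hu1 Hu2 Hu3 Hw1 Hw2 Hz n12 n13 n23 nw).
split.
- by rewrite Ek; apply: (one dk dl).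
- by rewrite El; apply: (one dl dk) => //; rewrite eq_sym.
Qed.
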